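(* Any quantum oracle algorithm that solves $\mathsf{DL\text{-}LCS\text{-}RLE}$ with probability at least $2/3$ requires $\Omega(n)$ queries, where $n$ is the encoded length of the inputs.
   Context: A string $\tilde s$ has run-length encoding (RLE) $s=s[1]\cdots s[m]$, its sequence of maximal runs of identical characters, each run having character $C(s[i])$ and length $R(s[i])$; $|s|=m$ is the encoded length. The problem $\mathsf{DL\text{-}LCS\text{-}RLE}$: given quantum oracle access to two RLE strings $A$ and $B$ only through the unitaries $|i\rangle|c\rangle|r\rangle\mapsto|i\rangle|c\oplus C(S[i])\rangle|r\oplus R(S[i])\rangle$ for $S\in\{A,B\}$ (no prefix-sum oracle), compute $|\tilde s|$ where $\tilde s$ is a longest common substring of the decoded strings $\tilde A$ and $\tilde B$. *)

(* Defs.v *)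
From mathcomp Require Import all_boot all_order all_algebra all_field.
From mathcomp Require Import spectral.
Set Implicit Arguments. Unset Strict Implicit. Unset Printing Implicit Defensive.
Import Order.TTheory GRing.Theory Num.Theory.
Local Open Scope ring_scope.

(* An RLE string is a sequence of runs (character, run length).  Position i
   (0-based here, 1-based in the paper) has C(s[i]) = (nth (0,0) s i).1 and
   R(s[i]) = (nth (0,0) s i).2.                                              *)
Definition rle := seq (nat * nat).

(* well-formed RLE string of encoded length n, characters coded in a bits
   (alphabet {0,...,2^a-1}) and run lengths fitting in b bits; consecutive runs
   have distinct characters (runs are maximal); run lengths are >= 1.        *)
Definition valid_rle (a b n : nat) (s : rle) : bool :=
  [&& size s == n,
      all (fun p => (p.1 < 2 ^ a)%N && (0 < p.2 < 2 ^ b)%N) s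
    & sorted (fun p q => p.1 != q.1) s].

Definition decode (s : rle) : seq nat := flatten [seq nseq p.2 p.1 | p <- s].

Definition lcsub_len (x y : seq nat) : nat :=
  \max_(w <- [seq take k (drop i x) | i <- iota 0 (size x).+1, k <- iota 0 (size x).+1]
         | infix w y) size w.

Definition DL_LCS_RLE (A B : rle) : nat := lcsub_len (decode A) (decode B).

Definition bits (k x : nat) : k.-tuple bool := [tuple odd (x %/ 2 ^ j) | j < k].
Definition txor (k : nat) (u v : k.-tuple bool) : k.-tuple bool :=
  [tuple (tnth u j) (+) (tnth v j) | j < k].

(* computational basis: index register |i>, character register |c> (a qubits),
   length register |r> (b qubits), workspace of dimension m *)
Definition basis (n a b m : nat) : finType :=
  ('I_n * a.-tuple bool * b.-tuple bool * 'I_m)%type.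
Definition dim (n a b m : nat) : nat := #|{: basis n a b m}|.

Definition oracle_map (n a b m : nat) (S : rle) (x : basis n a b m) : basis n a b m :=
  let: (i, c, r, w) := x in
  (i, txor c (bits a (nth (0, 0)%N S i).1), txor r (bits b (nth (0, 0)%N S i).2), w).

Definition oracle (n a b m : nat) (S : rle) : 'M[algC]_(dim n a b m) :=
  \matrix_(x, y) ((enum_val x == oracle_map S (enum_val y)) %:R).

(* A T-query algorithm: initial unit state psi0, unitaries U 0, ..., U T,
   the t-th query (t < T) goes to A if sel t = true and to B otherwise, and a
   final measurement in the computational basis followed by classical
   post-processing out. *)
Record qalg (n a b : nat) := QAlg {
  ws : nat;
  nq : nat;
  psi0 : 'cV[algC]_(dim n a b ws);
  U : nat -> 'M[algC]_(dim n a b ws);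
  sel : nat -> bool;
  out : basis n a b ws -> nat
}.

Definition qalg_wf (n a b : nat) (Q : qalg n a b) : Prop :=
  (\sum_(x < dim n a b (ws Q)) `|psi0 Q x 0| ^+ 2 = 1) /\
  (forall t, (t <= nq Q)%N -> U Q t \is unitarymx).

Fixpoint run_state (n a b : nat) (Q : qalg n a b) (A B : rle) (t : nat)
  : 'cV[algC]_(dim n a b (ws Q)) :=
  match t with
  | 0 => U Q 0 *m psi0 Q
  | t'.+1 => U Q t *m (@oracle n a b (ws Q) (if sel Q t' then A else B) *m run_state Q A B t')
  end.

Definition prob_out (n a b : nat) (Q : qalg n a b) (A B : rle) (v : nat) : algC :=
  \sum_(x < dim n a b (ws Q) | @out n a b Q (enum_val x) == v)
     `|@run_state n a b Q A B (nq Q) x 0| ^+ 2.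

(* Main.v *)
Require Import Defs.
From mathcomp Require Import all_boot all_order all_algebra all_field spectral.
Import Order.TTheory GRing.Theory Num.Theory.
Set Implicit Arguments. Unset Strict Implicit. Unset Printing Implicit Defensive.
Local Open Scope ring_scope.

Definition normv N (v : 'cV[algC]_N) : algC := \sum_(i < N) `|v i 0| ^+ 2.
Lemma normvE N (v : 'cV[algC]_N) : normv v = ((map_mx Num.conj v)^T *m v) 0 0.
Proof. rewrite /normv !mxE; apply: eq_bigr => i _; by rewrite !mxE normCK mulrC. Qed.
Lemma norm_unitary N (U : 'M[algC]_N) v : U \is unitarymx -> normv (U *m v) = normv v.
Proof.
move=> /unitarymxP HU.
have HU' : (map_mx Num.conj U)^T *m U = 1%:M.
  apply: mulmx1C. rewrite -HU; congr (_ *m _); apply/matrixP => i j; by rewrite !mxE.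
rewrite !normvE map_mxM trmx_mul -mulmxA (mulmxA _ U) HU' mul1mx. done.
Qed.

Lemma txorK k (u v : k.-tuple bool) : txor (txor u v) v = u.
Proof. apply: eq_from_tnth => j; by rewrite !tnth_mktuple addbK. Qed.

Lemma oracle_mapK n a b m S : involutive (@oracle_map n a b m S).
Proof. case=> [[[i c] r] w] /=; by rewrite !txorK. Qed.

Lemma oracle_mul n a b m S (v : 'cV_(Defs.dim n a b m)) x :
  (oracle n a b m S *m v) x 0 = v (enum_rank (oracle_map S (enum_val x))) 0.
Proof.
rewrite mxE (bigD1 (enum_rank (oracle_map S (enum_val x)))) //= !mxE.
rewrite enum_rankK oracle_mapK eqxx mul1r big1 ?addr0 // => y Hy.
rewrite !mxE; case: eqP => [E|]; last by rewrite mul0r.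
by move: Hy; rewrite E oracle_mapK enum_valK eqxx.
Qed.

Lemma norm_oracle n a b m S (v : 'cV_(Defs.dim n a b m)) :
  normv (oracle n a b m S *m v) = normv v.
Proof.
rewrite /normv; under eq_bigr do rewrite oracle_mul.
pose rho := fun x : 'I_(Defs.dim n a b m) => enum_rank (oracle_map S (enum_val x)).
have rhoK : involutive rho.
  by move=> x; rewrite /rho enum_rankK oracle_mapK enum_valK.
by rewrite [RHS](reindex_inj (inv_inj rhoK)).
Qed.

Lemma run_norm n a b (Q : qalg n a b) A B : qalg_wf Q ->
  forall t, (t <= nq Q)%N -> normv (run_state Q A B t) = 1.
Proof.
move=> [H0 HU]; elim=> [|t IH] Ht /=.
  by rewrite norm_unitary ?HU.
by rewrite norm_unitary ?HU // norm_oracle IH // ltnW.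
Qed.

Definition X n := {ffun 'I_n -> bool}.
Definition dep n (S : {set 'I_n}) (g : X n -> algC) :=
  forall x y : X n, (forall i, i \in S -> x i = y i) -> g x = g y.

Inductive low n (d : nat) : (X n -> algC) -> Prop :=
| LDep (S : {set 'I_n}) (g : X n -> algC) : (#|S| <= d)%N -> dep S g -> low d g
| LAdd (f g : X n -> algC) : low d f -> low d g -> low d (fun x => f x + g x)
| LExt (f g : X n -> algC) : (forall x, f x = g x) -> low d f -> low d g.

Lemma low_mono n d d' (f : X n -> algC) : low d f -> (d <= d')%N -> low d' f.
Proof.
move=> H Hd; elim: H => {f}.
- move=> S g HS Hg; apply: LDep Hg; exact: ssrnat.leq_trans HS Hd.
- by move=> f g _ Hf _ Hg; apply: LAdd.
- by move=> f g E _ H; apply: LExt E H.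
Qed.

Lemma low_const n d (c : algC) : low d (fun _ : X n => c).
Proof. by apply: (LDep (S := set0)); rewrite ?cards0. Qed.

Lemma low_mul n d1 d2 (f g : X n -> algC) :
  low d1 f -> low d2 g -> low (d1 + d2) (fun x => f x * g x).
Proof.
move=> Hf; elim: Hf g => {f}.
- move=> S f HS Hfd g Hg; elim: Hg => {g}.
  + move=> T g HT Hgd; apply: (LDep (S := S :|: T)).
      by rewrite cardsU; apply: ssrnat.leq_trans (leq_subr _ _) _; exact: leq_add.
    move=> x y Hxy; rewrite (Hfd x y) ?(Hgd x y) // => i Hi; apply: Hxy;
      by rewrite inE Hi ?orbT.
  + by move=> g h _ Hg _ Hh; apply: LExt (LAdd Hg Hh) => x; rewrite mulrDr.
  + by move=> g h E _ H; apply: LExt H => x; rewrite E.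
- by move=> f h _ Hf _ Hh g Hg; apply: LExt (LAdd (Hf g Hg) (Hh g Hg)) => x; rewrite mulrDl.
- by move=> f h E _ H g Hg; apply: LExt (H g Hg) => x; rewrite E.
Qed.

Lemma low_conj n d (f : X n -> algC) : low d f -> low d (fun x => (f x)^*).
Proof.
elim => {f}.
- move=> S g HS Hg; apply: (LDep (S := S)) => // x y H; by rewrite (Hg x y).
- by move=> f g _ Hf _ Hg; apply: LExt (LAdd Hf Hg) => x; rewrite rmorphD.
- by move=> f g E _ H; apply: LExt H => x; rewrite E.
Qed.

Lemma low_sum n d (I : Type) (r : seq I) (P : pred I) (F : I -> X n -> algC) :
  (forall i, P i -> low d (F i)) -> low d (fun x => \sum_(i <- r | P i) F i x).
Proof.
move=> H; elim: r => [|i r IH].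
  by apply: LExt (@low_const n d 0) => x; rewrite big_nil.
case Pi: (P i).
  by apply: LExt (LAdd (H i Pi) IH) => x; rewrite big_cons Pi.
by apply: LExt IH => x; rewrite big_cons Pi.
Qed.

Definition flip n (j : 'I_n) (x : X n) : X n :=
  [ffun i => if i == j then ~~ x i else x i].
Definition wt n (x : X n) : nat := (\sum_(i < n) (x i).+1)%N.
Definition sgn n (x : X n) : algC := (-1) ^+ wt x.

Lemma flipK n (j : 'I_n) : involutive (flip j).
Proof. by move=> x; apply/ffunP => i; rewrite !ffunE; case: eqP => //; rewrite negbK. Qed.

Lemma sgn_flip n (j : 'I_n) x : sgn (flip j x) = - sgn x.
Proof.
rewrite /sgn /wt (bigD1 j) //= [in RHS](bigD1 j) //= !exprD.
have -> : (\sum_(i < n | i != j) (flip j x i).+1 = \sum_(i < n | i != j) (x i).+1)%N.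
  by apply: eq_bigr => i /negbTE Hi; rewrite ffunE Hi.
rewrite ffunE eqxx; case: (x j) => /=; rewrite ?expr1 ?expr2 ?mulN1r ?opprK ?mul1r //.
Qed.

Lemma vanish n d (f : X n -> algC) : low d f -> (d < n)%N ->
  \sum_(x : X n) sgn x * f x = 0.
Proof.
elim => {f}.
- move=> S g HS Hg Hdn.
  have [j Hj] : exists j, j \notin S.
    case: (pickP (fun j => j \notin S)) => [j Hj|H]; first by exists j.
    have : [set: 'I_n] \subset S by apply/subsetP => i _; move: (H i) => /= /negbFE.
    move/subset_leq_card; rewrite cardsT card_ord => Hn.
    have := ssrnat.leq_trans Hn HS; have := Hdn; rewrite ltnNge => /negbTE -> //.
  set s := \sum_x _.
  have E : s = - s.
    rewrite /s [LHS](reindex_inj (inv_inj (flipK j))) -sumrN; apply: eq_bigr => x _.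
    rewrite sgn_flip mulNr (Hg (flip j x) x) // => i Hi; rewrite ffunE.
    by case: eqP Hi => [->|//]; rewrite (negbTE Hj).
  have : s *+ 2 = 0 by rewrite mulr2n {1}E addNr.
  by move/eqP; rewrite mulrn_eq0 /= => /eqP.
- move=> f g _ Hf _ Hg Hdn; under eq_bigr do rewrite mulrDr.
  by rewrite big_split /= Hf // Hg // addr0.
- by move=> f g E _ H Hdn; rewrite -[RHS](H Hdn); apply: eq_bigr => x _; rewrite E.
Qed.

Definition enc n (x : X n) : rle := [seq ((odd i : nat), (x i).+1) | i : 'I_n <- enum 'I_n].

Lemma enc_nth n (x : X n) (i : 'I_n) : nth (0,0)%N (enc x) i = ((odd i : nat), (x i).+1).
Proof. by rewrite /enc (nth_map i) ?size_enum_ord ?ltn_ord // nth_ord_enum. Qed.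

Lemma iota_alt m k : sorted (fun p q : nat => odd p != odd q) (iota m k).
Proof.
elim: k m => [|k IH] m //=; case: k IH => [|k] IH //=.
apply/andP; split; first by case: (odd m).
exact: (IH m.+1).
Qed.

Lemma enc_valid n a b (x : X n) : (1 <= a)%N -> (2 <= b)%N -> valid_rle a b n (enc x).
Proof.
move=> Ha Hb; rewrite /valid_rle size_map size_enum_ord eqxx /=.
have h1 : (2 ^ 1 <= 2 ^ a)%N by rewrite leq_exp2l.
have h2 : (2 ^ 2 <= 2 ^ b)%N by rewrite leq_exp2l.
apply/andP; split.
  apply/allP => p /mapP [i _ ->] /=.
  by case: (odd i); case: (x i) => /=; rewrite ?(ssrnat.leq_trans _ h1) ?(ssrnat.leq_trans _ h2).
rewrite sorted_map.
have := iota_alt 0 n; rewrite -val_enum_ord sorted_map.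
apply: sub_sorted => i j /=; by case: (odd i); case: (odd j).
Qed.

Lemma lcsub_refl (s : seq nat) : lcsub_len s s = size s.
Proof.
rewrite /lcsub_len; apply/eqP; rewrite eqn_leq; apply/andP; split.
  by apply/bigmax_leqP_seq => w _ /size_infix.
have Hs : s \in [seq take k (drop i s) | i <- iota 0 (size s).+1, k <- iota 0 (size s).+1].
  apply/allpairsP; exists (0%N, size s); split.
  - by rewrite mem_iota.
  - by rewrite mem_iota add0n ltnSn.
  - by rewrite /= drop0 take_size.
apply: (leq_bigmax_seq s Hs); exact: infix_refl.
Qed.

Lemma enc_DL n (x : X n) : DL_LCS_RLE (enc x) (enc x) = wt x.
Proof.
rewrite /DL_LCS_RLE lcsub_refl /decode size_flatten /shape -!map_comp sumnE big_map.
rewrite /wt; apply: eq_bigr => i _ /=; by rewrite size_nseq.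
Qed.

Lemma run_low n a b (Q : qalg n a b) t (y : 'I_(Defs.dim n a b (ws Q))) :
  low t (fun x : X n => run_state Q (enc x) (enc x) t y 0).
Proof.
elim: t y => [|t IH] y /=.
  exact: low_const.
apply: (@LExt _ _ (fun x => \sum_z U Q t.+1 y z *
   \sum_w oracle n a b (ws Q) (enc x) z w * run_state Q (enc x) (enc x) t w 0)).
  by move=> x; rewrite if_same !mxE; apply: eq_bigr => z _; rewrite !mxE.
apply: low_sum => z _.
apply: (@low_mono n (0 + t.+1)); last by rewrite add0n.
apply: low_mul; first exact: low_const.
apply: low_sum => w _.
apply: (@low_mono n (1 + t)); last by rewrite add1n.
apply: low_mul (IH w).
apply: (LDep (S := [set (enum_val w).1.1.1])); first by rewrite cards1.
move=> x x' Hxx'; rewrite !mxE.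
move: (enum_val w) Hxx' => [[[i c] r] m0] /= H.
by rewrite !enc_nth H ?set11.
Qed.

Lemma e13 : (1 - 2%:R/3%:R : algC) = 1/3%:R.
Proof. apply: (mulIf (x:=3%:R)); first by rewrite pnatr_eq0.
rewrite mulrBl !mulfVK ?pnatr_eq0 // mul1r -natrB //. Qed.
Lemma n1 : (1/2%:R : algC) < 2%:R/3%:R.
Proof. rewrite ltr_pdivrMr ?ltr0n // mulrAC ltr_pdivlMr ?ltr0n //.
by rewrite ?mul1r -?natrM ltr_nat. Qed.
Lemma n2 : (1 - 2%:R/3%:R : algC) < 1/2%:R.
Proof. rewrite e13 ltr_pdivrMr ?ltr0n // mulrAC ltr_pdivlMr ?ltr0n //.
by rewrite ?mul1r -?natrM ltr_nat. Qed.

Theorem lemma7 :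
  exists (k N0 : nat), (0 < k)%N /\
    forall (n a b : nat), (N0 <= n)%N -> (1 <= a)%N -> (2 <= b)%N ->
    forall Q : qalg n a b, qalg_wf Q ->
      (forall A B : rle, valid_rle a b n A -> valid_rle a b n B ->
         2%:R / 3%:R <= prob_out Q A B (DL_LCS_RLE A B)) ->
      (n <= k * nq Q)%N.
Proof.
exists 2%N, 0%N; split => // n a b _ Ha Hb Q Hwf Hcor.
rewrite leqNgt; apply/negP => Hlt.
set T := nq Q.
pose st (x : X n) := run_state Q (enc x) (enc x) T.
pose f x := \sum_(y < Defs.dim n a b (ws Q) | ~~ odd (@out n a b Q (enum_val y))) `|st x y 0| ^+ 2.
pose F x := f x - 1/2%:R.
have Hf : low (T + T) f.
  apply: low_sum => y _.
  have := low_mul (@run_low n a b Q T y) (low_conj (@run_low n a b Q T y)).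
  apply: LExt => x; by rewrite normCK.
have HF : low (T + T) F by exact: (LAdd Hf (low_const _ _ (- (1/2%:R)))).
have HTn : (T + T < n)%N by rewrite addnn -mul2n.
have Hv := vanish HF HTn.
have Hpos : forall x, 0 < sgn x * F x.
  move=> x.
  have Hc := Hcor (enc x) (enc x) (enc_valid x Ha Hb) (enc_valid x Ha Hb).
  rewrite enc_DL /prob_out in Hc.
  have Hn := run_norm (enc x) (enc x) Hwf (leqnn T).
  have ge0 : forall y, 0 <= `|st x y 0| ^+ 2 by move=> y; rewrite exprn_ge0.
  rewrite /sgn /F -signr_odd; case Ho: (odd (wt x)).
  - rewrite expr1 mulN1r oppr_gt0 subr_lt0.
    have Hs : f x + \sum_(y < Defs.dim n a b (ws Q) | @out n a b Q (enum_val y) == wt x)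
                 `|st x y 0| ^+ 2 <= 1.
      rewrite -Hn /normv /f !(big_mkcond _ (fun y => `|st x y 0| ^+ 2)) /= -big_split /=.
      apply: ler_sum => y _.
      case: eqP => [E|_]; first by rewrite E Ho /= add0r.
      by case: ifP => _; rewrite ?addr0 ?add0r ?lexx.
    apply: le_lt_trans n2.
    rewrite -lerBrDr in Hs.
    apply: (le_trans Hs); exact: lerB.
  - rewrite expr0 !mul1r subr_gt0.
    have n1p := n1; rewrite mul1r in n1p.
    apply: (lt_le_trans n1p); apply: (le_trans Hc).
    rewrite /f !(big_mkcond _ (fun y => `|st x y 0| ^+ 2)) /=.
    apply: ler_sum => y _.
    case: eqP => [E|_]; first by rewrite E Ho.
    by case: ifP => _.
have := psumr_eq0P (fun x _ => ltW (Hpos x)) Hv (i := [ffun => false]) isT.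
by move/eqP; rewrite gt_eqF ?Hpos.
Qed.
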